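(* Let $(G,\precsim)$ be a compatible quasi-ordered abelian group. For every $g\in G$: $g$ is v-type $\Leftrightarrow$ $g\sim-g$ $\Leftrightarrow$ ($0\precsim g$ and $0\precsim -g$). Equivalently: $g$ is o-type $\Leftrightarrow$ ($g\not\sim-g$ or $g=0$) $\Leftrightarrow$ ($g\precsim0$ or $-g\precsim0$).
   Context: A compatible quasi-ordered abelian group is an abelian group $G$ with a total quasi-order $\precsim$ (reflexive, transitive, any two elements comparable) such that, writing $a\sim b$ for $a\precsim b\wedge b\precsim a$: $(Q_1)$ $x\sim0\Rightarrow x=0$; $(Q_2)$ $x\precsim y\wedge y\not\sim z\Rightarrow x+z\precsim y+z$, for all $x,y,z$. Let $cl(g)$ be the $\sim$-class of $g$. An element $g$ is o-type if $cl(g)=\{g\}$ and $g$ is not of order $2$; $g$ is v-type if $\{g\}\subsetneq cl(g)$ or $2g=0$ (so $0$ is both o-type and v-type). *)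

(* Defs.v *)
From mathcomp Require Import all_boot all_algebra.
Set Implicit Arguments. Unset Strict Implicit. Unset Printing Implicit Defensive.
Import GRing.Theory.
Local Open Scope ring_scope.

Definition qsim (G : zmodType) (le : G -> G -> Prop) (a b : G) : Prop :=
  le a b /\ le b a.

(* Compatible quasi-ordered abelian group: total quasi-order with Q1, Q2. *)
Definition compatible_qo (G : zmodType) (le : G -> G -> Prop) : Prop :=
  [/\ (forall x, le x x),
      (forall x y z, le x y -> le y z -> le x z),
      (forall x y, le x y \/ le y x),
      (forall x, qsim le x 0 -> x = 0)
    & (forall x y z, le x y -> ~ qsim le y z -> le (x + z) (y + z))].

Definition cl (G : zmodType) (le : G -> G -> Prop) (g : G) : G -> Prop :=
  fun h => qsim le h g.

Definition order2 (G : zmodType) (g : G) : Prop := g != 0 /\ g + g = 0.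

Definition o_type (G : zmodType) (le : G -> G -> Prop) (g : G) : Prop :=
  (forall h, cl le g h <-> h = g) /\ ~ order2 g.

Definition v_type (G : zmodType) (le : G -> G -> Prop) (g : G) : Prop :=
  (* {g} is a proper subset of cl(g) (g \in cl(g) by reflexivity), or 2g = 0 *)
  (exists h, cl le g h /\ h <> g) \/ g + g = 0.

(* Main.v *)
Require Import Defs.
From mathcomp Require Import all_boot all_algebra.
From Stdlib Require Import Classical.
Local Open Scope ring_scope.
Import GRing.Theory.

Lemma gg0 (G : zmodType) (g : G) : g + g = 0 <-> - g = g.
Proof.
split=> H.
- by apply/eqP; rewrite eq_sym -addr_eq0 H.
- by apply/eqP; rewrite addr_eq0 H.
Qed.

Theorem mainTheorem4 (G : zmodType) (le : G -> G -> Prop)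
  (Hc : compatible_qo le) (g : G) :
  (v_type le g <-> qsim le g (- g)) /\
  (qsim le g (- g) <-> (le 0 g /\ le 0 (- g))) /\
  (o_type le g <-> (~ qsim le g (- g) \/ g = 0)) /\
  ((~ qsim le g (- g) \/ g = 0) <-> (le g 0 \/ le (- g) 0)).
Proof.
case: Hc => Hr Ht Htot Q1 Q2.
have C2 : qsim le g (- g) <-> (le 0 g /\ le 0 (- g)).
  split.
  - move=> [H1 H2]; split.
    + apply: NNPP => Hn.
      have Hg0 : le g 0 by case: (Htot 0 g).
      have Hb : ~ qsim le 0 (- g).
        by move=> [Hb1 Hb2]; apply: Hn; exact: Ht Hb1 H2.
      have := Q2 g 0 (- g) Hg0 Hb; rewrite add0r subrr => H0.
      by apply: Hn; exact: Ht H0 H2.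
    + apply: NNPP => Hn.
      have Hg0 : le (- g) 0 by case: (Htot 0 (- g)).
      have Hb : ~ qsim le 0 g.
        by move=> [Hb1 Hb2]; apply: Hn; exact: Ht Hb1 H1.
      have := Q2 (- g) 0 g Hg0 Hb; rewrite add0r addNr => H0.
      by apply: Hn; exact: Ht H0 H1.
  - move=> [H1 H2].
    apply: NNPP => Hn.
    have := Q2 0 g (- g) H1 Hn; rewrite add0r subrr => H3.
    have E : - g = 0 by apply: Q1; split.
    have E' : g = 0 by rewrite -[g]opprK E oppr0.
    by apply: Hn; rewrite E' oppr0; split; apply: Hr.
have L : ~ qsim le g (- g) -> forall h, qsim le h g -> h = g.
  move=> Hn h [Hh1 Hh2].
  have A := Q2 h g (- g) Hh1 Hn; rewrite subrr in A.
  have Hn' : ~ qsim le h (- g).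
    by move=> [K1 K2]; apply: Hn; split; [exact: Ht Hh2 K1 | exact: Ht K2 Hh1].
  have B := Q2 g h (- g) Hh2 Hn'; rewrite subrr in B.
  by apply/eqP; rewrite -subr_eq0; apply/eqP; apply: Q1; split.
have C4 : (~ qsim le g (- g) \/ g = 0) <-> (le g 0 \/ le (- g) 0).
  split.
  - case=> [Hn|->]; last by left; apply: Hr.
    case: (classic (le 0 g)) => H1; last by left; case: (Htot 0 g).
    case: (classic (le 0 (- g))) => H2; last by right; case: (Htot 0 (- g)).
    by exfalso; apply: Hn; apply/C2.
  - case: (classic (qsim le g (- g))) => Hs; last by left.
    move/C2: Hs => [H1 H2] [H|H]; right.
    + by apply: Q1; split.
    + have E : - g = 0 by apply: Q1; split.
      by rewrite -[g]opprK E oppr0.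
split; last split=> //; last split=> //.
- split.
  + case=> [[h [Hh Hne]]|H].
    * apply: NNPP => Hn; by apply: Hne; apply: L.
    * move/gg0: H => ->; split; apply: Hr.
  + move=> Hs; case: (classic (- g = g)) => E.
    * by right; apply/gg0.
    * by left; exists (- g); split => //; case: Hs.
- split.
  + move=> [Hcl Ho]; case: (classic (qsim le g (- g))) => Hs; last by left.
    right; have E : - g = g.
      by apply/Hcl; case: Hs.
    apply: NNPP => Hg; apply: Ho; split; last by apply/gg0.
    by apply/eqP.
  + case=> [Hn|->].
    * split.
      -- move=> h; split; first exact: L.
         by move=> ->; split; apply: Hr.
      -- move=> [_ H]; move/gg0: H => E; apply: Hn; rewrite E; split; apply: Hr.
    * split.
      -- move=> h; split; first by move=> H; apply: Q1.
         by move=> ->; split; apply: Hr.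
      -- by move=> [H _]; move: H; rewrite eqxx.
Qed.
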